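(* Let $R$ be an NJ-symmetric ring. Then $R/J(R)$ is reduced (has no nonzero nilpotent elements) if either (1) $R$ is semiperiodic, or (2) $R$ is left SF.
   Context: Rings are associative with identity. $N(R)$ is the set of nilpotent elements, $J(R)$ the Jacobson radical, $Z(R)$ the center. $R$ is NJ-symmetric if for all $a,b,c\in R$, $abc\in N(R)$ implies $bac\in J(R)$. $R$ is semiperiodic if for each $a\in R\setminus (J(R)\cup Z(R))$ there exist positive integers $p,q$ of opposite parity with $a^q-a^p\in N(R)$. $R$ is left SF if every simple left $R$-module is flat. *)

(* Defs.v *)
From HB Require Import structures.
From mathcomp Require Import all_boot all_order all_algebra.
Set Implicit Arguments. Unset Strict Implicit. Unset Printing Implicit Defensive.
Import Order.TTheory GRing.Theory Num.Theory.
Local Open Scope ring_scope.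

Section RingNotions.
Variable R : pzRingType.

Definition nilpotent_el (x : R) : Prop := exists n : nat, x ^+ n = 0.

Definition central (x : R) : Prop := forall y : R, x * y = y * x.

Definition left_ideal (I : R -> Prop) : Prop :=
  [/\ I 0, (forall x y, I x -> I y -> I (x + y)), (forall x, I x -> I (- x))
    & (forall r x, I x -> I (r * x))].

Definition maximal_left_ideal (I : R -> Prop) : Prop :=
  [/\ left_ideal I, ~ I 1 &
      forall K : R -> Prop, left_ideal K -> ~ K 1 ->
        (forall x, I x -> K x) -> forall x, K x -> I x].

Definition jacobson (x : R) : Prop :=
  forall I : R -> Prop, maximal_left_ideal I -> I x.

Definition NJ_symmetric : Prop :=
  forall a b c : R, nilpotent_el (a * b * c) -> jacobson (b * a * c).

Definition semiperiodic : Prop :=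
  forall a : R, ~ jacobson a -> ~ central a ->
    exists p q : nat, [/\ (0 < p)%N, (0 < q)%N, odd p != odd q
                        & nilpotent_el (a ^+ q - a ^+ p)].

(** R/J(R) is reduced: a coset x + J(R) with (x + J(R))^n = 0, i.e. x^n in J(R),
    is zero, i.e. x in J(R). *)
Definition reduced_mod_jacobson : Prop :=
  forall (x : R) (n : nat), jacobson (x ^+ n) -> jacobson x.

Definition submodule (M : lmodType R) (S : M -> Prop) : Prop :=
  [/\ S 0, (forall u v, S u -> S v -> S (u + v)) & (forall (r : R) u, S u -> S (r *: u))].

Definition simple_lmod (M : lmodType R) : Prop :=
  (exists m : M, m != 0) /\
  forall S : M -> Prop, submodule S -> (forall m, S m -> m = 0) \/ (forall m, S m).

(** Tensor product A (x)_R M of a right R-module A (= left R^c-module) and a left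
    R-module M, presented as the free abelian group on A * M modulo the
    balanced-bilinearity relations.  Formal sums are lists of (integer
    coefficient, generator); a formal sum represents 0 in A (x)_R M iff its
    coefficient function is an integer combination of relators. *)
Section Tensor.
Variables (A : lmodType R^c) (M : lmodType R).

Definition fsum := seq (int * (A * M)).

Definition fcoef (s : fsum) (p : A * M) : int :=
  \sum_(e <- s | e.2 == p) e.1.

Inductive trel :=
  | RelAddL of A & A & M
  | RelAddR of A & M & M
  | RelBal of A & R & M.

(* right action a.r is written r *: a in the R^c-module A *)
Definition relator (g : trel) : fsum :=
  match g with
  | RelAddL a a' m => [:: ((1 : int), (a + a', m)); ((-1 : int), (a, m)); ((-1 : int), (a', m))]
  | RelAddR a m m' => [:: ((1 : int), (a, m + m')); ((-1 : int), (a, m)); ((-1 : int), (a, m'))]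
  | RelBal a r m => [:: ((1 : int), ((r : R^c) *: a, m)); ((-1 : int), (a, r *: m))]
  end.

Definition tensor_zero (s : fsum) : Prop :=
  exists gs : seq (int * trel),
    forall p, fcoef s p = \sum_(g <- gs) g.1 * fcoef (relator g.2) p.

End Tensor.

Definition map_fsum (A B : lmodType R^c) (M : lmodType R) (f : A -> B)
  (s : fsum A M) : fsum B M :=
  map (fun e => (e.1, (f e.2.1, e.2.2))) s.

(** M is flat: - (x)_R M preserves injectivity of right-module maps, i.e.
    f (x) 1 : A (x) M -> B (x) M has trivial kernel for every injective f. *)
Definition flat_lmod (M : lmodType R) : Prop :=
  forall (A B : lmodType R^c) (f : {linear A -> B}), injective f ->
    forall s : fsum A M, tensor_zero (map_fsum f s) -> tensor_zero s.

Definition left_SF : Prop :=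
  forall M : lmodType R, simple_lmod M -> flat_lmod M.

End RingNotions.

(* Main.v *)
From HB Require Import structures.
Require Import Defs.
From mathcomp Require Import all_boot all_order all_algebra.
From mathcomp Require Import zify.
From Stdlib Require Import Classical ClassicalEpsilon FunctionalExtensionality PropExtensionality.
Set Implicit Arguments. Unset Strict Implicit. Unset Printing Implicit Defensive.
Import GRing.Theory.
Local Open Scope ring_scope.
Record subm (S : pzRingType) (V : lmodType S) := Subm {
  sp :> V -> Prop;
  sp0 : sp 0;
  spD : forall x y, sp x -> sp y -> sp (x + y);
  spN : forall x, sp x -> sp (- x);
  spZ : forall r x, sp x -> sp (r *: x) }.

Section Quot.
Variables (S : pzRingType) (V : lmodType S) (P : subm V).
Let P0 := sp0 P.
Let PD := @spD _ _ P.
Let PN := @spN _ _ P.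
Let PZ := @spZ _ _ P.

Definition canon (x : V) : V := epsilon (inhabits 0) (fun y => P (x - y)).

Lemma canonP x : P (x - canon x).
Proof. apply: (epsilon_spec (inhabits 0) (fun y => P (x - y))); exists x; by rewrite subrr. Qed.

Lemma canon_eq x y : P (x - y) -> canon x = canon y.
Proof.
move=> h; rewrite /canon; congr epsilon; apply: functional_extensionality => z.
apply: propositional_extensionality; split=> hz.
  have := PD (PN h) hz; by rewrite opprB addrA subrK.
have := PD h hz; by rewrite addrA subrK.
Qed.

Lemma canon_id x : canon (canon x) = canon x.
Proof. apply: canon_eq; have := PN (canonP x); by rewrite opprB. Qed.

Record quot := Quot { qval : V; _ : canon qval == qval }.
HB.instance Definition _ := [isSub for qval].
HB.instance Definition _ := [Choice of quot by <:].

Definition qpi (x : V) : quot := @Quot (canon x) (introT eqP (canon_id x)).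

Lemma qpi_val u : qpi (qval u) = u.
Proof. apply: val_inj => /=; case: u => x /= /eqP; done. Qed.

Lemma qpiP x y : qpi x = qpi y <-> P (x - y).
Proof.
split; last by move=> h; apply: val_inj => /=; apply: canon_eq.
move=> /(congr1 qval) /= e.
have h1 := canonP x; have h2 := PN (canonP y).
have := PD h1 h2; by rewrite e opprB addrA subrK.
Qed.

Lemma qvalP x : P (qval (qpi x) - x).
Proof. have := PN (canonP x); by rewrite opprB. Qed.

Definition qzero := qpi 0.
Definition qadd u v := qpi (qval u + qval v).
Definition qopp u := qpi (- qval u).
Definition qscale r u := qpi (r *: qval u).

Lemma qaddE x y : qadd (qpi x) (qpi y) = qpi (x + y).
Proof.
apply/qpiP; have h1 := qvalP x; have h2 := qvalP y.
have := PD h1 h2; congr (sp P).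
by rewrite opprD addrACA.
Qed.
Lemma qoppE x : qopp (qpi x) = qpi (- x).
Proof. apply/qpiP; have := PN (qvalP x); congr (sp P); by rewrite opprB opprK addrC. Qed.
Lemma qscaleE r x : qscale r (qpi x) = qpi (r *: x).
Proof. apply/qpiP; have := PZ r (qvalP x); congr (sp P); by rewrite scalerBr. Qed.

Lemma qquotW (Q : quot -> Prop) : (forall x, Q (qpi x)) -> forall u, Q u.
Proof. move=> h u; rewrite -[u]qpi_val; exact: h. Qed.

Lemma qaddA : associative qadd.
Proof. by elim/qquotW=> x; elim/qquotW=> y; elim/qquotW=> z; rewrite !qaddE addrA. Qed.
Lemma qaddC : commutative qadd.
Proof. by elim/qquotW=> x; elim/qquotW=> y; rewrite !qaddE addrC. Qed.
Lemma qadd0 : left_id qzero qadd.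
Proof. by elim/qquotW=> x; rewrite /qzero qaddE add0r. Qed.
Lemma qaddN : left_inverse qzero qopp qadd.
Proof. by elim/qquotW=> x; rewrite qoppE qaddE addNr. Qed.

HB.instance Definition _ := GRing.isZmodule.Build quot qaddA qaddC qadd0 qaddN.

Lemma qscaleA a b v : qscale a (qscale b v) = qscale (a * b) v.
Proof. by elim/qquotW: v => x; rewrite !qscaleE scalerA. Qed.
Lemma qscale1 : left_id 1 qscale.
Proof. by elim/qquotW=> x; rewrite qscaleE scale1r. Qed.
Lemma qscaleDr : right_distributive qscale +%R.
Proof. move=> a; elim/qquotW=> x; elim/qquotW=> y.
change (qscale a (qadd (qpi x) (qpi y)) = qadd (qscale a (qpi x)) (qscale a (qpi y))).
by rewrite [qadd (qpi x) _]qaddE !qscaleE qaddE scalerDr. Qed.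
Lemma qscaleDl v : {morph qscale^~ v: a b / a + b}.
Proof. elim/qquotW: v => x a b /=.
change (qscale (a + b) (qpi x) = qadd (qscale a (qpi x)) (qscale b (qpi x))).
by rewrite !qscaleE qaddE scalerDl. Qed.

HB.instance Definition _ := GRing.Zmodule_isLmodule.Build S quot qscaleA qscale1 qscaleDr qscaleDl.

Lemma qpiD x y : qpi (x + y) = qpi x + qpi y. Proof. by rewrite -qaddE. Qed.
Lemma qpiZ r x : qpi (r *: x) = r *: qpi x. Proof. by rewrite -qscaleE. Qed.
Lemma qpi0 : qpi 0 = 0. Proof. by []. Qed.
Lemma qpi_eq0 x : qpi x = 0 <-> P x.
Proof. rewrite -qpi0 qpiP subr0; done. Qed.
End Quot.

Section J.
Variable R : pzRingType.
Implicit Types (I : R -> Prop) (x y a r : R).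

Lemma mli0 I : maximal_left_ideal I -> I 0. Proof. by case=> [[]]. Qed.
Lemma mliD I x y : maximal_left_ideal I -> I x -> I y -> I (x + y). Proof. by case=> [[]]; auto. Qed.
Lemma mliN I x : maximal_left_ideal I -> I x -> I (- x). Proof. by case=> [[]]; auto. Qed.
Lemma mliM I r x : maximal_left_ideal I -> I x -> I (r * x). Proof. by case=> [[]]; auto. Qed.
Lemma mli1 I : maximal_left_ideal I -> ~ I 1. Proof. by case. Qed.
Lemma mliB I x y : maximal_left_ideal I -> I x -> I y -> I (x - y).
Proof. by move=> h hx hy; apply: mliD => //; apply: mliN. Qed.

Lemma mli_gen I a : maximal_left_ideal I -> ~ I a ->
  exists i r, I i /\ 1 = i + r * a.
Proof.
move=> hI ha; apply: NNPP => hn.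
pose K := fun z => exists i r, I i /\ z = i + r * a.
have hK : left_ideal K.
  split.
  - exists 0, 0; split; [exact: mli0 | by rewrite mul0r addr0].
  - move=> x y [i [r [hi ->]]] [j [s [hj ->]]]; exists (i + j), (r + s); split.
      exact: mliD. by rewrite mulrDl addrACA.
  - move=> x [i [r [hi ->]]]; exists (- i), (- r); split; first exact: mliN.
    by rewrite opprD mulNr.
  - move=> s x [i [r [hi ->]]]; exists (s * i), (s * r); split; first exact: mliM.
    by rewrite mulrDr mulrA.
have K1 : ~ K 1 by move=> [i [r [hi e]]]; apply: hn; exists i, r.
have I0 := mli0 hI.
case: hI => _ _ hmax; apply: ha; apply: (hmax K hK K1).
  by move=> x hx; exists x, 0; rewrite mul0r addr0.
by exists 0, 1; rewrite mul1r add0r.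
Qed.

Lemma colon_max I r : maximal_left_ideal I -> ~ I r ->
  maximal_left_ideal (fun x => I (x * r)).
Proof.
move=> hI hr; split.
- split.
  + by rewrite mul0r; apply: mli0.
  + by move=> x y hx hy; rewrite mulrDl; apply: mliD.
  + by move=> x hx; rewrite mulNr; apply: mliN.
  + by move=> s x hx; rewrite -mulrA; apply: mliM.
- by rewrite mul1r.
move=> K hK K1 hsub k hk.
pose K' := fun z => exists x i, K x /\ I i /\ z = x * r + i.
have hK' : left_ideal K'.
  case: hK => K0 KD KN KM; split.
  - exists 0, 0; rewrite mul0r addr0; do !split => //; exact: mli0.
  - move=> x y [u [i [hu [hi ->]]]] [v [j [hv [hj ->]]]].
    exists (u + v), (i + j); do !split; [exact: KD | exact: mliD|].
    by rewrite mulrDl addrACA.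
  - move=> x [u [i [hu [hi ->]]]]; exists (- u), (- i); do !split; [exact: KN|exact: mliN|].
    by rewrite opprD mulNr.
  - move=> s x [u [i [hu [hi ->]]]]; exists (s * u), (s * i); do !split; [exact: KM|exact: mliM|].
    by rewrite mulrDr mulrA.
case: (classic (K' 1)) => h1.
  exfalso; apply: K1.
  have : K' r by case: hK' => _ _ _ KM; rewrite -[r]mulr1; exact: (KM r 1 h1).
  move=> [x [i [hx [hi e]]]].
  have hc : I ((1 - x) * r) by rewrite mulrBl mul1r {1}e addrAC subrr add0r.
  have := hsub _ hc; case: hK => _ KD _ _ h.
  by have := KD _ _ h hx; rewrite subrK.
have K0 : K 0 by case: hK.
have I0 := mli0 hI.
case: hI => _ _ hmax.
have hsub' : forall x, I x -> K' x.
  by move=> x hx; exists 0, x; rewrite mul0r add0r.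
apply: (hmax K' hK' h1 hsub' (k * r)).
by exists k, 0; rewrite addr0.
Qed.

Lemma J0 : jacobson (0 : R). Proof. by move=> I hI; apply: mli0. Qed.
Lemma JD x y : jacobson x -> jacobson y -> jacobson (x + y).
Proof. by move=> hx hy I hI; apply: mliD => //; [apply: hx|apply: hy]. Qed.
Lemma JN x : jacobson x -> jacobson (- x).
Proof. by move=> hx I hI; apply: mliN => //; apply: hx. Qed.
Lemma JB x y : jacobson x -> jacobson y -> jacobson (x - y).
Proof. by move=> hx hy; apply: JD => //; apply: JN. Qed.
Lemma JMl r x : jacobson x -> jacobson (r * x).
Proof. by move=> hx I hI; apply: mliM => //; apply: hx. Qed.
Lemma JMr x r : jacobson x -> jacobson (x * r).
Proof.
move=> hx I hI; case: (classic (I r)) => hr.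
  have hr1 : ~ I (r - 1).
    by move=> h; apply: (mli1 hI); have := mliB hI hr h; rewrite opprB addrC subrK.
  have := hx _ (colon_max hI hr1) => /= h.
  have := mliD hI h (hx _ hI); by rewrite mulrBr mulr1 subrK.
exact: (hx _ (colon_max hI hr)).
Qed.
Lemma JMn x n : jacobson x -> jacobson (x *+ n).
Proof. by move=> hx; elim: n => [|n ih]; [rewrite mulr0n; apply: J0 | rewrite mulrS; apply: JD]. Qed.
End J.

Lemma L1 (V : zmodType) (X Y U W : V) : X + Y - (X - U) - (Y - W) = U + W.
Proof. by rewrite [X + Y]addrC addrKA opprK [Y + U]addrC addrKA opprK. Qed.
Lemma L2 (R : pzRingType) (a : R) q p : a * (1 + a *+ q + (1 + a *+ p)) - (a * a *+ q + a * a *+ p) = a *+ 2.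
Proof. by rewrite !mulrDr !mulr1 !mulrnAr addrACA addrK mulr2n. Qed.
Section C1.
Variable R : pzRingType.
Implicit Types (x y a r : R).

Lemma Nsub : NJ_symmetric R -> forall x : R, nilpotent_el x -> jacobson x.
Proof. move=> h x hx; have := h 1 x 1; rewrite !mulr1 mul1r; exact. Qed.

Lemma reduce : (forall a : R, jacobson (a * a) -> jacobson a) -> reduced_mod_jacobson R.
Proof.
move=> h x n; elim/ltn_ind: n => n ih hJ.
case: n ih hJ => [|[|n]] ih hJ.
- by rewrite -[x]mulr1; apply: JMl; rewrite expr0 in hJ.
- by rewrite expr1 in hJ.
set m := (n.+2 - n.+2 %/ 2)%N.
have hm : (m < n.+2)%N by rewrite /m; lia.
have hm2 : (m + m = (m + m - n.+2) + n.+2)%N by rewrite /m; lia.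
apply: (ih m hm); apply: h; rewrite -exprD hm2 exprD; exact: JMl.
Qed.

Lemma powJ a : jacobson (a * a) -> forall k,
  jacobson ((1 + a) ^+ k - (1 + a *+ k)).
Proof.
move=> ha; elim=> [|k ih]; first by rewrite expr0 mulr0n addr0 subrr; apply: J0.
have e : (1 + a) ^+ k.+1 - (1 + a *+ k.+1) =
  ((1 + a) ^+ k - (1 + a *+ k)) * (1 + a) + (a * a) *+ k.
  rewrite exprSr mulrBl; set X := _ ^+ k * _.
  rewrite mulrDl mul1r mulrDr mulr1 mulrS -mulrnAl.
  rewrite -[RHS]addrA; congr (X + _).
  have -> : 1 + a + (a *+ k + a *+ k * a) = 1 + (a + a *+ k) + a *+ k * a by rewrite !addrA.
  by rewrite [in RHS]opprD addrNK.
by rewrite e; apply: JD; [apply: JMr | apply: JMn].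
Qed.

Lemma oddJ a d : jacobson (a *+ 2) -> odd d -> jacobson (a *+ d) -> jacobson a.
Proof.
move=> h2 hd hJ.
have e : a = a *+ d - (a *+ 2) *+ d./2.
  have ed : d = (d./2 * 2).+1 by rewrite -{1}(odd_double_half d) hd -muln2.
  by rewrite {1}ed mulrS mulnC mulrnA addrK.
rewrite e; apply: JB => //; exact: JMn.
Qed.

Lemma case1 : NJ_symmetric R -> semiperiodic R ->
  forall a : R, jacobson (a * a) -> jacobson a.
Proof.
move=> hNJ hsp a ha; apply: NNPP => hna.
case: (classic (central a)) => hc.
  apply: hna => I hI; apply: NNPP => hIa.
  have [i [r [hi e]]] := mli_gen hI hIa; apply: hIa.
  have -> : a = a * i + r * (a * a).
    by rewrite mulrA -(hc r) -mulrA -mulrDr -e mulr1.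
  apply: mliD => //; first exact: mliM.
  apply: mliM => //; exact: ha.
set b := 1 + a.
have hb : ~ jacobson b.
  move=> hb; apply: hna; have := JB (JMl a hb) ha.
  by rewrite mulrDr mulr1 addrK.
have hbc : ~ central b.
  move=> hb'; apply: hc => y; have := hb' y.
  rewrite /b mulrDl mulrDr mul1r mulr1 => /addrI; done.
have hc' : ~ jacobson (- b) by move=> h; apply: hb; rewrite -[b]opprK; apply: JN.
have hcc : ~ central (- b).
  by move=> h; apply: hbc => y; have := h y; rewrite mulNr mulrN => /oppr_inj.
have hpow := powJ ha.
have [p [q [p0 q0 hpq hn]]] := hsp b hb hbc.
have hA : jacobson (a *+ q - a *+ p).
  have := JB (JB (Nsub hNJ hn) (hpow q)) (JN (hpow p)).
  congr jacobson; rewrite /b; set X := _ ^+ q; set Y := _ ^+ p.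
  rewrite !opprD !opprK. 
  by rewrite addrACA subrK -addrA addNKr addrACA subrr add0r.
have [p' [q' [p0' q0' hpq' hn']]] := hsp (- b) hc' hcc.
have hB : jacobson (b ^+ q' + b ^+ p').
  have hJ := Nsub hNJ hn'.
  rewrite (exprNn b q') (exprNn b p') -(signr_odd _ q') -(signr_odd _ p') in hJ.
  move: hpq' hJ; case: (odd q'); case: (odd p') => //= _ hJ.
    by have := JN hJ; rewrite expr1 expr0 mulN1r mul1r opprD !opprK.
  by rewrite expr1 expr0 mulN1r mul1r opprK in hJ.
have hB2 : jacobson ((1 + a *+ q') + (1 + a *+ p')).
  have := JB (JB hB (hpow q')) (hpow p'); congr jacobson.
  by rewrite /b L1.
have h2 : jacobson (a *+ 2).
  have := JB (JMl a hB2) (JD (JMn q' ha) (JMn p' ha)); congr jacobson.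
  by rewrite L2.
case: (leqP p q) => hle.
  apply: hna; apply: (@oddJ a (q - p)%N h2); first by rewrite oddB // addbC; case: (odd p) (odd q) hpq => [] [].
  by rewrite mulrnBr.
apply: hna; apply: (@oddJ a (p - q)%N h2); first by rewrite oddB ?(ltnW hle) //; case: (odd p) (odd q) hpq => [] [].
by rewrite mulrnBr ?(ltnW hle) //; have := JN hA; rewrite opprB.
Qed.
End C1.

Section Ann.
Variables (R : pzRingType) (a : R).

Definition annP (x : (R^c)^o) : Prop := a * (x : R) = 0.
Lemma annP0 : annP 0. Proof. exact: mulr0. Qed.
Lemma annPD x y : annP x -> annP y -> annP (x + y).
Proof. by rewrite /annP => hx hy; change (a * ((x : R) + y) = 0); rewrite mulrDr hx hy addr0. Qed.
Lemma annPN x : annP x -> annP (- x).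
Proof. by rewrite /annP => hx; change (a * (- (x : R)) = 0); rewrite mulrN hx oppr0. Qed.
Lemma annPZ (r : R^c) x : annP x -> annP (r *: x).
Proof. by rewrite /annP => hx; change (a * ((x : R) * r) = 0); rewrite mulrA hx mul0r. Qed.
Definition annS := Subm annP0 annPD annPN annPZ.
Definition Aq := quot annS.
Definition fA (u : Aq) : (R^c)^o := (a * (qval u : R) : R).

Lemma fA_pi x : fA (qpi annS x) = (a * x : R).
Proof.
have := qvalP annS x; rewrite /= /annP; change (a * ((qval (qpi annS x) : R) - x) = 0 -> fA (qpi annS x) = a * x).
by rewrite mulrBr => /eqP; rewrite subr_eq0 => /eqP.
Qed.

Lemma fA_lin : linear fA.
Proof.
move=> r; elim/qquotW=> x; elim/qquotW=> y.
rewrite -qpiZ -qpiD !fA_pi.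
change (a * ((x : R) * r + y) = (a * x) * r + a * y).
by rewrite mulrDr mulrA.
Qed.
HB.instance Definition _ := GRing.isLinear.Build (R^c) Aq ((R^c)^o) *:%R fA fA_lin.

Lemma fA_inj : injective fA.
Proof.
elim/qquotW=> x; elim/qquotW=> y; rewrite !fA_pi => e.
apply/qpiP; rewrite /= /annP; change (a * ((x : R) - y) = 0).
by rewrite mulrBr e subrr.
Qed.
End Ann.

Section Simp.
Variables (R : pzRingType) (M : R -> Prop) (hM : maximal_left_ideal M).

Definition MP (x : R^o) : Prop := M x.
Lemma MP0 : MP 0. Proof. exact: mli0. Qed.
Lemma MPD x y : MP x -> MP y -> MP (x + y). Proof. exact: mliD. Qed.
Lemma MPN x : MP x -> MP (- x). Proof. exact: mliN. Qed.
Lemma MPZ (r : R) x : MP x -> MP (r *: x). Proof. exact: mliM. Qed.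
Definition Msub := Subm MP0 MPD MPN MPZ.
Definition Bq := quot Msub.

Lemma Bq_simple : simple_lmod Bq.
Proof.
split.
  exists (qpi Msub 1); apply/eqP => /qpi_eq0 h; exact: (mli1 hM h).
move=> S [S0 SD SZ].
pose K := fun x : R => S (qpi Msub x).
have hK : left_ideal K.
  split.
  - by rewrite /K qpi0.
  - by move=> x y hx hy; rewrite /K (@qpiD _ _ Msub x y); apply: SD.
  - move=> x hx; rewrite /K; have -> : (- x : R) = ((-1 : R) *: (x : R^o)) by rewrite scaleN1r.
    by rewrite qpiZ; apply: SZ.
  - move=> r x hx; rewrite /K; change (S (qpi Msub (r *: (x : R^o)))).
    by rewrite qpiZ; apply: SZ.
case: (classic (K 1)) => h1.
  right=> m; rewrite -[m]qpi_val.
  have -> : qval m = (qval m : R) *: (1 : R^o) by rewrite /GRing.scale /= mulr1.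
  by rewrite qpiZ; apply: SZ.
left=> m hm.
case: hM => _ _ hmax.
have hsub : forall x, M x -> K x by move=> x hx; rewrite /K; have /qpi_eq0 -> : Msub x by []; done.
have := hmax K hK h1 hsub (qval m).
rewrite /K qpi_val => /(_ hm) hq.
by rewrite -[m]qpi_val; apply/qpi_eq0.
Qed.
End Simp.

Lemma sum_repr (R : pzRingType) (T : eqType) (phi : T -> R) (s : seq (int * T)) (U : seq T) :
  uniq U -> {subset [seq e.2 | e <- s] <= U} ->
  \sum_(e <- s) phi e.2 *~ e.1 = \sum_(p <- U) phi p *~ (\sum_(e <- s | e.2 == p) e.1).
Proof.
move=> hU; elim: s => [|e s ih] hsub.
  by rewrite big_nil big1 // => p _; rewrite big_nil mulr0z.
rewrite big_cons ih; last by move=> x hx; apply: hsub; rewrite /= inE hx orbT.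
have -> : \sum_(p <- U) phi p *~ (\sum_(e0 <- e :: s | e0.2 == p) e0.1) =
   \sum_(p <- U) ((if e.2 == p then phi p *~ e.1 else 0) + phi p *~ (\sum_(e0 <- s | e0.2 == p) e0.1)).
  apply: eq_bigr => p _; rewrite big_cons; case: eqP => _ //; first by rewrite mulrzDr.
  by rewrite add0r.
rewrite big_split /=; congr (_ + _).
have he : e.2 \in U by apply: hsub; rewrite /= inE eqxx.
rewrite (bigD1_seq e.2) //= eqxx big1 ?addr0 // => p /negPf hp; by rewrite eq_sym hp.
Qed.

Lemma in_map_In (T : Type) (U : eqType) (f : T -> U) x s : List.In x s -> f x \in map f s.
Proof. elim: s => [|y s ih] //= [->|h]; rewrite inE; [by rewrite eqxx | by rewrite ih ?orbT]. Qed.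

Section Tens.
Variables (R : pzRingType) (M : R -> Prop) (hM : maximal_left_ideal M) (a : R) (hMa : M a).

Definition s0 : fsum (Aq a) (Bq hM) := [:: ((1 : int), (qpi (annS a) 1, qpi (Msub hM) 1))].

Lemma s0_map : tensor_zero (map_fsum ((@fA _ a)) s0).
Proof.
exists [:: ((1 : int), RelBal (1 : (R^c)^o) a (qpi (Msub hM) 1)); ((-1 : int), RelAddR (1 : (R^c)^o) 0 0)].
have e1 : (@fA _ a) (qpi (annS a) 1) = (a : (R^c)^o) by rewrite fA_pi mulr1.
have e2 : (a : R^c) *: (1 : (R^c)^o) = (a : (R^c)^o) by rewrite /GRing.scale /=; change (1 * a = a); rewrite mul1r.
have e3 : a *: (qpi (Msub hM) 1) = 0 by rewrite -qpiZ; apply/qpi_eq0; rewrite /= /MP; change (M (a * 1)); rewrite mulr1.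
move=> p; rewrite /fcoef /map_fsum /= !big_cons !big_nil /= e1 e2 e3 (addr0 (0 : Bq hM)).
by case: ((a : (R^c)^o, qpi (Msub hM) 1) == p); case: ((1 : (R^c)^o, 0 : Bq hM) == p).
Qed.

Lemma fa1 (x : (R^c)^o) : a * (qval (qpi (annS a) x) : R) = a * x.
Proof. exact: (fA_pi a x). Qed.
Lemma fm1 (x : R^o) : M ((qval (qpi (Msub hM) x) : R) - x).
Proof. exact: (qvalP (Msub hM) x). Qed.

Lemma faD (u u' : Aq a) : a * (qval (u + u') : R) = a * (qval u : R) + a * (qval u' : R).
Proof. have := fa1 (qval u + qval u'); rewrite mulrDr; exact. Qed.
Lemma faZ (r : R^c) (u : Aq a) : a * (qval (r *: u) : R) = a * ((qval u : R) * r).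
Proof. exact: (fa1 (r *: qval u)). Qed.
Lemma fmD (z z' : Bq hM) : M ((qval (z + z') : R) - ((qval z : R) + (qval z' : R))).
Proof. exact: (fm1 (qval z + qval z')). Qed.
Lemma fmZ (r : R) (z : Bq hM) : M ((qval (r *: z) : R) - r * (qval z : R)).
Proof. exact: (fm1 (r *: qval z)). Qed.

Definition Pm (v : R) := exists y, M y /\ v = a * y.
Lemma Pm0 : Pm 0. Proof. by exists 0; rewrite mulr0; split => //; apply: mli0. Qed.
Lemma PmD x y : Pm x -> Pm y -> Pm (x + y).
Proof. by move=> [u [hu ->]] [v [hv ->]]; exists (u + v); rewrite mulrDr; split => //; apply: mliD. Qed.
Lemma PmZ x n : Pm x -> Pm (x *~ n).
Proof. by move=> [u [hu ->]]; exists (u *~ n); rewrite mulrzAr; split => //; rewrite -mulrzl; apply: mliM. Qed.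
Lemma Pm_sum (I : Type) (r : seq I) (F : I -> R) : (forall i, Pm (F i)) -> Pm (\sum_(i <- r) F i).
Proof. by move=> h; apply: (big_ind Pm) => //; [apply: Pm0 | apply: PmD]. Qed.

Definition phi (p : Aq a * Bq hM) : R := a * (qval p.1 : R) * (qval p.2 : R).

Lemma key (g : trel (Aq a) (Bq hM)) : Pm (\sum_(e <- relator g) phi e.2 *~ e.1).
Proof.
case: g => [u u' z | u z z' | u r z] /=; rewrite !big_cons big_nil /= addr0 mulr1z !mulrN1z /phi /=.
- rewrite faD mulrDl addrACA !subrr addr0; exact: Pm0.
- move: (fmD z z') => /= hm; set Z := canon _ _ in hm *.
  exists ((qval u : R) * (Z - ((qval z : R) + (qval z' : R)))); split; first exact: mliM.
  by rewrite mulrA mulrBr mulrDr opprD.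
- move: (fmZ r z) (faZ r u) => /= hm hf; set Z := canon (Msub hM) _ in hm *.
  rewrite hf; exists (- ((qval u : R) * (Z - r * (qval z : R)))); split.
    by apply: mliN => //; apply: mliM.
  by rewrite mulrN 2![in RHS]mulrBr opprB !mulrA.
Qed.

Lemma sf_key : left_SF R -> exists t, M t /\ a * (1 - t) = 0.
Proof.
move=> hSF.
have [gs hgs] := hSF (Bq hM) (Bq_simple hM) (Aq a) ((R^c)^o) (@fA _ a) (@fA_inj _ a) s0 s0_map.
set U := undup ([seq e.2 | e <- s0] ++ flatten [seq [seq e.2 | e <- relator g.2] | g <- gs]).
have hU : uniq U by apply: undup_uniq.
have main : Pm (\sum_(e <- s0) phi e.2 *~ e.1).
  rewrite (@sum_repr _ _ phi s0 U hU); last by move=> x hx; rewrite mem_undup mem_cat hx.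
  have -> : \sum_(p <- U) phi p *~ (\sum_(e <- s0 | e.2 == p) e.1) =
      \sum_(g <- gs) (\sum_(p <- U) phi p *~ fcoef (relator g.2) p) *~ g.1.
    rewrite (eq_bigr (fun p => \sum_(g <- gs) (phi p *~ fcoef (relator g.2) p) *~ g.1)); last first.
      move=> p _; have := hgs p; rewrite /fcoef => ->; rewrite mulrz_sumr; apply: eq_bigr => g _.
      by rewrite mulrC mulrzA.
    rewrite exchange_big /=; apply: eq_bigr => g _; by rewrite mulrz_suml.
  have hin : forall g, List.In g gs -> {subset [seq e.2 | e <- relator g.2] <= U}.
    move=> g hg x hx; rewrite mem_undup mem_cat; apply/orP; right.
    apply/flattenP; exists [seq e.2 | e <- relator g.2] => //.
    exact: (in_map_In (fun g0 : int * trel (Aq a) (Bq hM) => [seq e.2 | e <- relator g0.2])).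
  clearbody U; clear hgs; elim: gs hin => [|g gs' ih] hin; first by rewrite big_nil; exact: Pm0.
  rewrite big_cons; apply: PmD; last by apply: ih => g0 hg0; apply: hin; right.
  apply: PmZ; rewrite -(@sum_repr _ _ phi (relator g.2) U hU); first exact: key.
  by apply: hin; left.
rewrite /s0 big_cons big_nil addr0 mulr1z /phi /= in main.
move: (fa1 1) (fm1 1) => /= h1 h2; rewrite h1 mulr1 in main.
case: main => y [hy e]; set w := canon (Msub hM) 1 in h2 e.
exists (1 - (w - y)); split.
  have -> : 1 - (w - y) = y - (w - 1) by rewrite !opprB addrCA.
  exact: mliB.
by rewrite opprB addrCA subrr addr0 mulrBr e subrr.
Qed.
End Tens.

Section C2.
Variable R : pzRingType.
Lemma case2 : NJ_symmetric R -> left_SF R -> forall a : R, jacobson (a * a) -> jacobson a.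
Proof.
move=> hNJ hSF a ha; apply: NNPP => hna.
have [I hI] : exists I, ~ (maximal_left_ideal I -> I a) by apply: not_all_ex_not.
have [hmax hIa] := imply_to_and _ _ hI.
have hM := colon_max hmax hIa.
have hMa : (fun x => I (x * a)) a := ha I hmax.
have [t [ht e]] := @sf_key R _ hM a hMa hSF.
have hn : nilpotent_el (a * (1 - t) * 1) by exists 1%N; rewrite expr1 mulr1 e.
have := hNJ _ _ _ hn; rewrite mulr1 => hJ.
have hM1 : (fun x => I (x * a)) (1 - t) := hJ I hmax.
apply: (mli1 hM); have := mliD hM hM1 ht; rewrite subrK; exact.
Qed.
End C2.

Theorem theorem2p16 (R : pzRingType) :
  NJ_symmetric R -> (semiperiodic R \/ left_SF R) -> reduced_mod_jacobson R.
Proof.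
move=> hNJ [h|h]; apply: reduce; [exact: case1 | exact: case2].
Qed.
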